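(* Let $\mathcal{A}$ be a weighted pushdown system with state set $Q$ and stack alphabet $\Gamma$, let $c_1,c_2$ be configurations and $n\in\mathbb{Z}$. Suppose there is a path from $c_1$ to $c_2$ of total weight at least $n$, and let $d\in\mathbb{N}$ be the minimum additional stack height among all paths from $c_1$ to $c_2$ with total weight at least $n$. If $d\geq(|Q|\cdot|\Gamma|)^2$, then there is a path $\pi^*$ from $c_1$ to $c_2$ with additional stack height $d$ that has a pumpable pair $(p_1,p_2)$ with $w(p_1)+w(p_2)>0$.
   Context: A weighted pushdown system (WPS) is $\mathcal{A}=\langle Q,\Gamma,q_0,E,w\rangle$ with finite state set $Q$, initial state $q_0$, finite stack alphabet $\Gamma$ containing a bottom symbol $\bot$ that can be neither pushed nor popped, edges $E\subseteq(Q\times\Gamma)\times(Q\times\mathrm{Com}(\Gamma))$ where $\mathrm{Com}(\Gamma)=\{\mathit{skip},\mathit{pop}\}\cup\{\mathit{push}(z):z\in\Gamma\}$, and weights $w:E\to\mathbb{Z}$. Configurations are $(\alpha,q)$ with $\alpha\in\Gamma^+$, $q\in Q$; $(\alpha',q')$ is a successor of $(\alpha,q)$ if some edge $(q,\gamma,q',\mathit{com})$ has $\gamma$ the top of $\alpha$ and $\alpha'=\mathit{com}(\alpha)$. A path is a sequence of successive configurations (equivalently a start configuration plus a sequence of edges); its weight $w(\pi)$ is the sum of the weights of its edges. For a finite path with stacks $\alpha_1,\dots,\alpha_n$, $\mathrm{ASH}(\pi)=\max_i|\alpha_i|-\max\{|\alpha_1|,|\alpha_n|\}$. A pumpable pair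 of a path $\pi=\langle c_1e_1e_2\dots\rangle$ is a pair of nonempty disjoint blocks of consecutive edges $p_1$ (earlier) and $p_2$ (later) such that for every $j\ge 0$, repeating $p_1$ and $p_2$ each exactly $j$ times (in place) yields a valid path from $c_1$; $w(p_i)$ is the sum of weights of the edges of $p_i$. *)

(* Defs.v *)
From HB Require Import structures.
From mathcomp Require Import all_boot all_order all_algebra.
Set Implicit Arguments. Unset Strict Implicit. Unset Printing Implicit Defensive.
Import Order.TTheory GRing.Theory Num.Theory.

Inductive com (G : Type) : Type :=
| Skip : com G
| Pop : com G
| Push : G -> com G.

Record edge (Q G : Type) : Type := Edge {
  e_src : Q; e_top : G; e_dst : Q; e_com : com G }.

Record wps : Type := WPS {
  st : finType;
  alph : finType;
  bot : alph;
  q0 : st;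
  E : edge st alph -> bool;
  w : edge st alph -> int;
  no_push_bot : forall e, E e -> e_com e <> Push bot;
  no_pop_bot : forall e, E e -> e_top e = bot -> e_com e <> Pop alph }.

(* A configuration (alpha, q); stack as a sequence with the top at the head. *)
Definition config (A : wps) : Type := (seq (alph A) * st A)%type.

Definition apply_com (G : Type) (c : com G) (s : seq G) : seq G :=
  match c with
  | Skip => s
  | Pop => behead s
  | Push z => z :: s
  end.

(* Successor configuration via edge e (None if e is not applicable or
   the resulting stack is not in Gamma^+). *)
Definition step (A : wps) (c : config A) (e : edge (st A) (alph A))
  : option (config A) :=
  match c.1 with
  | [::] => None
  | g :: _ =>
      if [&& E e, c.2 == e_src e & g == e_top e] then
        let s' := apply_com (e_com e) c.1 in
        if s' is [::] then None else Some (s', e_dst e)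
      else None
  end.

(* Runs the edge sequence from c; returns the successive configurations
   after c (not including c), or None if the path is invalid. *)
Fixpoint run (A : wps) (c : config A) (es : seq (edge (st A) (alph A)))
  : option (seq (config A)) :=
  match es with
  | [::] => Some [::]
  | e :: es' =>
      match step c e with
      | None => None
      | Some c' =>
          match run c' es' with
          | None => None
          | Some cs => Some (c' :: cs)
          end
      end
  end.

Definition valid_path (A : wps) (c : config A) (es : seq (edge (st A) (alph A)))
  : Prop := c.1 != [::] /\ run c es <> None.

Definition path_from_to (A : wps) (c1 c2 : config A)
  (es : seq (edge (st A) (alph A))) : Prop :=
  c1.1 != [::] /\ exists cs, run c1 es = Some cs /\ last c1 cs = c2.

Definition pweight (A : wps) (es : seq (edge (st A) (alph A))) : int :=
  \sum_(e <- es) w e.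

Definition ash (A : wps) (c : config A) (es : seq (edge (st A) (alph A))) : nat :=
  match run c es with
  | None => 0
  | Some cs =>
      (\max_(x <- c :: cs) size x.1 - maxn (size c.1) (size (last c cs).1))%N
  end.

Definition rep (T : Type) (j : nat) (p : seq T) : seq T := flatten (nseq j p).

Definition pumpable_pair (A : wps) (c : config A)
  (es p1 p2 : seq (edge (st A) (alph A))) : Prop :=
  (0 < size p1)%N /\ (0 < size p2)%N /\
  exists x y z, es = x ++ p1 ++ y ++ p2 ++ z /\
    forall j : nat, valid_path c (x ++ rep j p1 ++ y ++ rep j p2 ++ z).

(* Main.v *)
Require Import Defs.
From HB Require Import structures.
From mathcomp Require Import all_boot all_order all_algebra.
Import Order.TTheory GRing.Theory Num.Theory.
From mathcomp Require Import zify.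
Set Implicit Arguments. Unset Strict Implicit.

Section Infra.
Variable A : wps.
Notation cfg := (config A).
Notation edg := (edge (st A) (alph A)).

Lemma run_cat (c : cfg) p q : run c (p ++ q) =
  match run c p with Some cs => omap (cat cs) (run (last c cs) q) | None => None end.
Proof.
elim: p c => [|e p IH] c /=; first by case: (run c q).
case: (step c e) => [c'|] //; rewrite IH.
case: (run c' p) => [cs|] //=; by case: (run _ q).
Qed.

Definition reachB (c : cfg) (p : seq edg) (c' : cfg) (H : nat) :=
  exists cs, [/\ run c p = Some cs, last c cs = c' & all (fun x => size x.1 <= H) cs].

Lemma reachB_cat c p c' q c'' H : reachB c p c' H -> reachB c' q c'' H -> reachB c (p ++ q) c'' H.
Proof.
move=> [cs [H1 H2 H3]] [cs' [H1' H2' H3']]; exists (cs ++ cs'); split.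
- by rewrite run_cat H1 H2 H1'.
- by rewrite last_cat H2.
- by rewrite all_cat H3 H3'.
Qed.

Lemma reachB_mono c p c' H H' : H <= H' -> reachB c p c' H -> reachB c p c' H'.
Proof.
move=> HH [cs [H1 H2 H3]]; exists cs; split => //.
apply/allP => x Hx; apply: leq_trans HH; exact: (allP H3).
Qed.

Definition reach c p c' := exists H, reachB c p c' H.

Lemma reach_cat c p c' q c'' : reach c p c' -> reach c' q c'' -> reach c (p ++ q) c''.
Proof.
move=> [H1 R1] [H2 R2]; exists (maxn H1 H2); apply: reachB_cat.
  apply: reachB_mono R1; exact: leq_maxl.
apply: reachB_mono R2; exact: leq_maxr.
Qed.

Lemma reach_run c p c' : reach c p c' -> run c p <> None.
Proof. by move=> [H [cs [-> _ _]]]. Qed.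

Definition addb (t : seq (alph A)) (x : cfg) : cfg := (x.1 ++ t, x.2).

Lemma frame p (s t : seq (alph A)) q cs : s != [::] ->
  run (s ++ t, q) p = Some cs -> all (fun x => size t < size x.1) cs ->
  exists cs0, cs = map (addb t) cs0 /\
   forall t', run (s ++ t', q) p = Some (map (addb t') cs0).
Proof.
elim: p s q cs => [|e p IH] s q cs Hs /=.
  by move=> [<-] _; exists [::].
case: s Hs => [|g s1] // _.
rewrite /step /=.
case Hc: [&& E e, q == e_src e & g == e_top e] => //.
have Happ : forall t0, apply_com (e_com e) ((g :: s1) ++ t0) = apply_com (e_com e) (g :: s1) ++ t0.
  by move=> t0; case: (e_com e).
rewrite Happ.
set s' := apply_com (e_com e) (g :: s1).
case Hs': s' => [|g' s'']. 
  rewrite cat0s; move: IH; case: t => [|g0 t0] _ //.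
  case Hr: (run _ p) => [cs1|] // [<-] /= /andP[].
  by rewrite ltnn.
rewrite /=.
case Hr: (run _ p) => [cs1|] // [<-] /= /andP[_ Hall].
have [cs0 [E1 E2]] := IH (g' :: s'') (e_dst e) cs1 isT Hr Hall.
exists ((g' :: s'', e_dst e) :: cs0); split; first by rewrite E1.
move=> t'; rewrite (Happ t') -/s' Hs' /= E2 /=.
by [].
Qed.


Lemma run_size (c : cfg) (p : seq edg) cs : run c p = Some cs -> size cs = size p.
Proof.
elim: p c cs => [|e p IH] c cs /=; first by case=> <-.
case: (step c e) => [c'|] //; case Hr: (run c' p) => [cs'|] // [<-] /=.
by rewrite (IH _ _ Hr).
Qed.

Lemma run_nth (c : cfg) (p : seq edg) cs e0 k : run c p = Some cs -> k < size p ->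
  step (nth c (c :: cs) k) (nth e0 p k) = Some (nth c (c :: cs) k.+1).
Proof.
elim: p c cs k => [|e p IH] c cs k //=.
case Hs: (step c e) => [c'|] //; case Hr: (run c' p) => [cs'|] // [<-].
case: k => [|k] /= Hk; first by rewrite Hs.
have Hsz := run_size Hr.
rewrite (set_nth_default c') /=; last by rewrite Hsz ltnS ltnW.
rewrite (set_nth_default c' c) /=; last by rewrite Hsz.
exact: IH.
Qed.

Lemma step_size (c : cfg) (e : edg) c' : step c e = Some c' ->
  [/\ c.1 != [::], c'.1 != [::], size c'.1 <= (size c.1).+1 & size c.1 <= (size c'.1).+1].
Proof.
rewrite /step; case: c.1 => [|g s] //.
case: ifP => // _; case: e => /= _ _ d cm.
case: cm => [||z] /=; case: s => [|g' s'] //=.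
all: by case=> <- /=; rewrite ?ltnS ?leqnSn ?leqnn ?leqW.
Qed.

Lemma run_drop (c : cfg) (p : seq edg) cs a : run c p = Some cs -> a <= size p ->
  run (nth c (c :: cs) a) (drop a p) = Some (drop a cs).
Proof.
elim: p c cs a => [|e p IH] c cs a /=.
  by case=> <-; rewrite leqn0 => /eqP ->.
case Hs: (step c e) => [c'|] //; case Hr: (run c' p) => [cs'|] // [<-].
case: a => [|a] /= Ha; first by rewrite Hs Hr.
rewrite (set_nth_default c') /=; last by rewrite (run_size Hr) ltnS.
exact: IH.
Qed.

Lemma run_take (c : cfg) (p : seq edg) cs b : run c p = Some cs ->
  run c (take b p) = Some (take b cs).
Proof.
elim: p c cs b => [|e p IH] c cs b /=; first by case=> <-.
case Hs: (step c e) => [c'|] //; case Hr: (run c' p) => [cs'|] // [<-].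
case: b => [|b] //=.
by rewrite Hs (IH _ _ _ Hr).
Qed.

Definition slice (T : Type) a b (s : seq T) := take (b - a) (drop a s).

Lemma run_slice (c : cfg) (p : seq edg) cs a b : run c p = Some cs -> a <= b -> b <= size p ->
  run (nth c (c :: cs) a) (slice a b p) = Some (slice a b cs) /\
  last (nth c (c :: cs) a) (slice a b cs) = nth c (c :: cs) b.
Proof.
move=> Hr Hab Hb; split.
  by apply: run_take; apply: run_drop => //; apply: leq_trans Hb.
have Hs := run_size Hr.
have Hsz : size (slice a b cs) = b - a.
  by rewrite /slice size_takel // size_drop Hs leq_sub2r.
rewrite (last_nth c) Hsz.
case E: (b - a) => [|k].
  by have -> : b = a by lia.
rewrite /= /slice E nth_take // nth_drop.
have -> : b = (a + k).+1 by lia.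
by [].
Qed.

Lemma all_slice (T : Type) (P : pred T) (c : T) cs a b :
  (forall k, a < k -> k <= b -> P (nth c (c :: cs) k)) -> all P (slice a b cs).
Proof.
move=> H; apply/(all_nthP c) => i; rewrite /slice size_take_min size_drop => Hi.
rewrite nth_take; last by lia.
rewrite nth_drop; have -> : nth c cs (a + i) = nth c (c :: cs) (a + i).+1 by [].
apply: H; first by rewrite ltnS leq_addr.
by lia.
Qed.


Lemma rep_swap (T : Type) k (v : seq T) : v ++ rep k v = rep k v ++ v.
Proof. by elim: k => [|k IH] /=; rewrite ?cats0 // -catA -IH. Qed.

Lemma reach_nil (c : cfg) : reach c [::] c.
Proof. by exists 0, [::]. Qed.

Lemma pump_up (g : alph A) (q : st A) (p : seq edg) v :
  (forall t', reach (g :: t', q) p (g :: v ++ t', q)) ->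
  forall k t', reach (g :: t', q) (rep k p) (g :: rep k v ++ t', q).
Proof.
move=> H; elim=> [|k IH] t' /=; first exact: reach_nil.
apply: reach_cat (H t') _.
have -> : rep k.+1 v = rep k v ++ v by rewrite -rep_swap.
by rewrite -catA; apply: IH.
Qed.

Lemma pump_down (g : alph A) (q : st A) (p : seq edg) v :
  (forall t', reach (g :: v ++ t', q) p (g :: t', q)) ->
  forall k t', reach (g :: rep k v ++ t', q) (rep k p) (g :: t', q).
Proof.
move=> H; elim=> [|k IH] t' /=; first exact: reach_nil.
rewrite -catA; apply: reach_cat (H _) _; exact: IH.
Qed.

End Infra.

Fixpoint lastb (h : nat -> nat) l t :=
  if h t == l then t else if t is t'.+1 then lastb h l t' else 0.

Lemma lastbP h l t : (exists k, k <= t /\ h k = l) ->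
  [/\ lastb h l t <= t, h (lastb h l t) = l & forall k, lastb h l t < k <= t -> h k != l].
Proof.
elim: t => [|t IH] [k [Hk Hh]] /=.
  move: Hk; rewrite leqn0 => /eqP Hk; subst k; rewrite Hh eqxx; split => // k'; lia.
case: ifP => [/eqP Ht|Ht].
  split => // k'; lia.
have Hk' : k <= t by move: Hk; rewrite leq_eqVlt => /orP[/eqP E|//]; subst k; rewrite Hh eqxx in Ht.
have [H1 H2 H3] := IH (ex_intro _ k (conj Hk' Hh)).
split => //; first by apply: leq_trans H1 _.
move=> k' /andP[Hlt Hle]; move: Hle; rewrite leq_eqVlt => /orP[/eqP ->|Hle]; first by rewrite Ht.
by apply: H3; rewrite Hlt.
Qed.

Lemma ivt_up (h : nat -> nat) a b l : a <= b -> (forall k, a <= k -> k < b -> h k.+1 <= (h k).+1) ->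
  h a <= l -> l <= h b -> exists c, [/\ a <= c, c <= b & h c = l].
Proof.
elim: b => [|b IH] Hab Hs Ha Hb.
  move: Hab; rewrite leqn0 => /eqP E; subst a; exists 0; split => //; lia.
case: (eqVneq a b.+1) => [E|Ne].
  subst a; exists b.+1; split => //; lia.
have Hab' : a <= b by lia.
case: (leqP l (h b)) => Hl.
  have [c [H1 H2 H3]] := IH Hab' (fun k H1 H2 => Hs k H1 (ltnW H2)) Ha Hl.
  by exists c; split => //; apply: leq_trans H2 _.
have := Hs b Hab' (ltnSn b); exists b.+1; split => //; lia.
Qed.

Lemma ivt_down (h : nat -> nat) a b l : a <= b -> (forall k, a <= k -> k < b -> h k <= (h k.+1).+1) ->
  l <= h a -> h b <= l -> exists c, [/\ a <= c, c <= b & h c = l].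
Proof.
elim: b => [|b IH] Hab Hs Ha Hb.
  move: Hab; rewrite leqn0 => /eqP E; subst a; exists 0; split => //; lia.
case: (eqVneq a b.+1) => [E|Ne].
  subst a; exists b.+1; split => //; lia.
have Hab' : a <= b by lia.
case: (leqP (h b) l) => Hl.
  have [c [H1 H2 H3]] := IH Hab' (fun k H1 H2 => Hs k H1 (ltnW H2)) Ha Hl.
  by exists c; split => //; apply: leq_trans H2 _.
have := Hs b Hab' (ltnSn b); exists b.+1; split => //; lia.
Qed.


Lemma comb (X : finType) (h : nat -> nat) (lab : nat -> X) (m t B : nat) :
  t <= m -> (forall k, k < m -> h k.+1 <= (h k).+1 /\ h k <= (h k.+1).+1) ->
  h 0 <= B -> h m <= B -> (#|X| ^ 2 <= h t - B) ->
  exists r1 r2 f2 f1, [/\ (r1 < r2 <= f2) && (f2 < f1 <= m), h r1 = h f1 /\ h r2 = h f2,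
    h r1 < h r2,
    (forall k, r1 < k -> k < f1 -> h r1 < h k) /\ (forall k, r2 < k -> k < f2 -> h r2 < h k) &
    lab r1 = lab r2 /\ lab f1 = lab f2].
Proof.
move=> Htm Hstep H0 Hm Hcard.
have Su : forall k, k < m -> h k.+1 <= (h k).+1 := fun k Hk => (Hstep k Hk).1.
have Sd : forall k, k < m -> h k <= (h k.+1).+1 := fun k Hk => (Hstep k Hk).2.
have Xpos : 0 < #|X| by apply/card_gt0P; exists (lab 0).
have HBt : B < h t.
  have : 1 <= #|X| ^ 2 by rewrite expn_gt0 Xpos.
  lia.
pose r l := lastb h l t.
have R : forall l, B <= l <= h t -> [/\ r l <= t, h (r l) = l & forall k, r l < k -> k <= t -> l < h k].
  move=> l /andP[Hl1 Hl2].
  have [c [_ Hc1 Hc2]] : exists c, [/\ 0 <= c, c <= t & h c = l].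
    apply: ivt_up; [lia | move=> k _ Hk; apply: Su; lia | lia | lia].
  have [H1 H2 H3] := lastbP (ex_intro _ c (conj Hc1 Hc2)).
  split => // k Hk1 Hk2; rewrite /r in Hk1; rewrite ltnNge; apply/negP => Hkl.
  have Hkl' : h k < l.
    by rewrite ltn_neqAle Hkl andbT; apply: H3; apply/andP; split.
  have [c' [Hc'1 Hc'2 Hc'3]] : exists c', [/\ k <= c', c' <= t & h c' = l].
    apply: ivt_up; [lia | move=> k' _ Hk'; apply: Su; lia | lia | lia].
  have : h c' != l by apply: H3; apply/andP; split; lia.
  by rewrite Hc'3 eqxx.
pose f l := m - lastb (fun k => h (m - k)) l (m - t).
have F : forall l, B <= l <= h t -> [/\ t <= f l, f l <= m, h (f l) = l & forall k, t <= k -> k < f l -> l < h k].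
  move=> l /andP[Hl1 Hl2].
  have [c [Hc0 Hc1 Hc2]] : exists c, [/\ t <= c, c <= m & h c = l].
    apply: ivt_down; [lia | move=> k _ Hk; apply: Sd; lia | lia | lia].
  have Ex : exists k, k <= m - t /\ h (m - k) = l.
    by exists (m - c); split; [lia | rewrite subKn].
  have [H1 H2 H3] := lastbP Ex.
  have Hne : forall k, t <= k -> k < f l -> h k != l.
    move=> k Hk1 Hk2; rewrite /f in Hk2; have := H3 (m - k); rewrite subKn; last by lia.
    apply; apply/andP; split; lia.
  split => //; [rewrite /f; lia | rewrite /f; lia | ].
  move=> k Hk1 Hk2; rewrite ltnNge; apply/negP => Hkl.
  have Hkl' : h k < l by rewrite ltn_neqAle Hkl andbT; apply: Hne.
  have [c' [Hc'1 Hc'2 Hc'3]] : exists c', [/\ t <= c', c' <= k & h c' = l].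
    apply: ivt_down; [lia | move=> k' _ Hk'; apply: Sd; rewrite /f in Hk2; lia | lia | lia].
  have : h c' != l by apply: Hne; [lia | apply: leq_ltn_trans Hk2].
  by rewrite Hc'3 eqxx.
pose g := fun i : nat => (lab (r (B + i)), lab (f (B + i))).
have key : forall i j, i < j -> j <= h t - B -> g i = g j ->
  exists r1 r2 f2 f1, [/\ (r1 < r2 <= f2) && (f2 < f1 <= m), h r1 = h f1 /\ h r2 = h f2,
    h r1 < h r2,
    (forall k, r1 < k -> k < f1 -> h r1 < h k) /\ (forall k, r2 < k -> k < f2 -> h r2 < h k) &
    lab r1 = lab r2 /\ lab f1 = lab f2].
  move=> i j Hij Hj [Eg1 Eg2].
  have Hl1 : B <= B + i <= h t by apply/andP; split; lia.
  have Hl2 : B <= B + j <= h t by apply/andP; split; lia.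
  have [R11 R12 R13] := R _ Hl1; have [R21 R22 R23] := R _ Hl2.
  have [F11 F12 F13 F14] := F _ Hl1; have [F21 F22 F23 F24] := F _ Hl2.
  exists (r (B + i)), (r (B + j)), (f (B + j)), (f (B + i)).
  have Hr : r (B + i) < r (B + j).
    rewrite ltnNge; apply/negP => Hle.
    case: (ltngtP (r (B + j)) (r (B + i))) => Hc.
    - have := R23 (r (B + i)) Hc R11; lia.
    - lia.
    - have : h (r (B + i)) = h (r (B + j)) by rewrite Hc.
      lia.
  have Hf : f (B + j) < f (B + i).
    rewrite ltnNge; apply/negP => Hle.
    case: (ltngtP (f (B + i)) (f (B + j))) => Hc.
    - have := F24 (f (B + i)) F11 Hc; lia.
    - lia.
    - have : h (f (B + i)) = h (f (B + j)) by rewrite Hc.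
      lia.
  split.
  - apply/andP; split; apply/andP; split; lia.
  - lia.
  - lia.
  - split => k Hk1 Hk2.
    + case: (leqP k t) => Hk; first by rewrite R12; apply: R13.
      by rewrite R12; apply: F14 => //; lia.
    + case: (leqP k t) => Hk; first by rewrite R22; apply: R23.
      by rewrite R22; apply: F24 => //; lia.
  - by split.
pose g' := fun i : 'I_(h t - B).+1 => g (val i).
have : ~~ injectiveb g'.
  apply/negP => /injectiveP Hinj.
  have := @leq_card _ _ g' Hinj; rewrite card_ord card_prod.
  move: Hcard; rewrite expnS expn1; lia.
move/injectivePn => [i [j Hij Hg]].
move: Hij; rewrite -(inj_eq val_inj) => Hij.
have Hi := ltn_ord i; have Hj := ltn_ord j.
case: (ltngtP (val i) (val j)) Hij => // Hc _.
- apply: (key (val i) (val j)) => //; lia.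
- apply: (key (val j) (val i)) => //; lia.
Qed.

Lemma slice_cat (T : Type) a b c (s : seq T) : a <= b -> b <= c ->
  slice a b s ++ slice b c s = slice a c s.
Proof.
move=> Hab Hbc; rewrite /slice.
have -> : drop b s = drop (b - a) (drop a s) by rewrite drop_drop subnK.
by rewrite -takeD; congr take; lia.
Qed.

Lemma slice_full (T : Type) (s : seq T) : slice 0 (size s) s = s.
Proof. by rewrite /slice drop0 subn0 take_size. Qed.

Lemma ex_max_nth (T : Type) (F : T -> nat) (x : T) (s : seq T) :
  exists k, k < size (x :: s) /\ F (nth x (x :: s) k) = \max_(y <- x :: s) F y.
Proof.
elim: s x => [|y s IH] x; first by exists 0; rewrite big_cons big_nil maxn0.
have [k [Hk Hk2]] := IH y.
rewrite big_cons; case: (leqP (\max_(z <- y :: s) F z) (F x)) => Hc.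
  by exists 0; split => //; rewrite (maxn_idPl Hc).
exists k.+1; split => //=; rewrite (set_nth_default y) // Hk2; lia.
Qed.

Section Main.
Variable A : wps.
Notation cfg := (config A).
Notation edg := (edge (st A) (alph A)).

Lemma ex_bound (cs : seq cfg) : exists H, all (fun x => size x.1 <= H) cs.
Proof.
exists (\max_(x <- cs) size x.1); apply/allP => x Hx.
exact: (@leq_bigmax_seq _ _ xpredT (fun x : cfg => size x.1) x).
Qed.

Lemma frame_reach (p : seq edg) (s t : seq (alph A)) q cs : s != [::] ->
  run (s ++ t, q) p = Some cs -> all (fun x => size t < size x.1) cs ->
  exists u q', last (s ++ t, q) cs = (u ++ t, q') /\
    (forall t', reach (s ++ t', q) p (u ++ t', q')) /\
    (forall t' H, size t' <= size t -> all (fun x => size x.1 <= H) cs ->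
       reachB (s ++ t', q) p (u ++ t', q') H).
Proof.
move=> Hs Hr Hall.
have [cs0 [E1 E2]] := frame Hs Hr Hall.
case El: (last (s, q) cs0) => [u q'].
have Hl : forall t', last (s ++ t', q) (map (addb t') cs0) = (u ++ t', q').
  by move=> t'; rewrite (_ : (s ++ t', q) = addb t' (s, q)) // last_map El.
exists u, q'; split; first by rewrite E1 Hl.
split.
  move=> t'; have [H HH] := ex_bound (map (addb t') cs0).
  by exists H, (map (addb t') cs0); split; rewrite ?E2 ?Hl.
move=> t' H Ht' HH; exists (map (addb t') cs0); split; rewrite ?E2 ?Hl //.
rewrite all_map; apply/allP => x Hx /=.
have : size (x.1 ++ t) <= H.
  by have := allP HH (addb t x); rewrite E1; apply; apply: map_f.
rewrite /addb /= !size_cat; lia.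
Qed.

Lemma cfg_split (c : cfg) : c.1 != [::] -> c = ([:: head (bot A) c.1] ++ behead c.1, c.2).
Proof. by case: c => [[|g s] q]. Qed.

End Main.

Section Dec.
Variable A : wps.
Notation cfg := (config A).
Notation edg := (edge (st A) (alph A)).
Variables (c1 : cfg) (cs : seq cfg).
Local Notation C k := (nth c1 (c1 :: cs) k).
Local Notation h k := (size (C k).1).

Lemma decomp (es : seq edg) c2 d :
  c1.1 != [::] -> run c1 es = Some cs -> last c1 cs = c2 -> ash c1 es = d ->
  ((#|st A| * #|alph A|) ^ 2 <= d) ->
  exists x p1 y p2 z, [/\ es = x ++ p1 ++ y ++ p2 ++ z, 0 < size p1, 0 < size p2,
    forall j, valid_path c1 (x ++ rep j p1 ++ y ++ rep j p2 ++ z) &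
    path_from_to c1 c2 (x ++ y ++ z) /\ ash c1 (x ++ y ++ z) <= d].
Proof.
move=> Hc1 Hrun Hlast Hash Hd.
rewrite /ash Hrun in Hash.
set M := \max_(x <- c1 :: cs) size x.1 in Hash.
set m := size es.
have Hsz : size cs = m := run_size Hrun.
have e0 : edg := Edge c1.2 (bot A) c1.2 (Skip _).
have Hstep : forall k, k < m -> step (C k) (nth e0 es k) = Some (C k.+1).
  by move=> k Hk; apply: run_nth.
have Hne : forall k, k <= m -> (C k).1 != [::].
  move=> [|k] Hk; first exact: Hc1.
  by have [] := step_size (Hstep k Hk).
have Hh : forall k, k < m -> h k.+1 <= (h k).+1 /\ h k <= (h k.+1).+1.
  by move=> k Hk; have [] := step_size (Hstep k Hk).
have HM : forall k, k <= m -> h k <= M.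
  move=> k Hk; apply: (@leq_bigmax_seq _ _ xpredT (fun x : cfg => size x.1)) => //.
  by apply: mem_nth; rewrite /= Hsz ltnS.
have [t [Ht HtM]] := ex_max_nth (fun x : cfg => size x.1) c1 cs.
rewrite /= Hsz ltnS in Ht.
have HC2 : C m = c2 by rewrite -Hlast (last_nth c1) Hsz.
set B := maxn (h 0) (h m).
have HB : M - B = d by rewrite -Hash Hlast -HC2.
pose lab := fun k => ((C k).2, head (bot A) (C k).1).
have Hcard : #|{: st A * alph A}| ^ 2 <= (fun k => h k) t - B.
  by rewrite card_prod /= HtM -/M HB.
have [r1 [r2 [f2 [f1 [Hord [Hh1 Hh2] Hlt [I1 I2] [L1 L2]]]]]] :=
  @comb _ (fun k => h k) lab m t B Ht Hh (leq_maxl _ _) (leq_maxr _ _) Hcard.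
move/and3P: Hord => [/andP[Hr12 Hr2f2] Hf21 Hf1m].
rewrite /= in Hh1 Hh2 Hlt I1 I2.
rewrite /lab in L1 L2; case: L1 => Lq1 Lg1; case: L2 => Lq2 Lg2.
have RS : forall a b, a <= b -> b <= m ->
   run (C a) (slice a b es) = Some (slice a b cs) /\ last (C a) (slice a b cs) = C b.
  by move=> a b Hab Hbm; apply: run_slice.
have Hr1m : r1 <= m by lia.
have Hr2m : r2 <= m by lia.
have Hf2m : f2 <= m by lia.
have Er1 := cfg_split (Hne r1 Hr1m).
set g := head (bot A) (C r1).1 in Er1 Lg1.
set a := behead (C r1).1 in Er1.
set q := (C r1).2 in Er1 Lq1.
have Hsa : h r1 = (size a).+1 by rewrite Er1.
have [RS1 RL1] := RS r1 r2 (ltnW Hr12) Hr2m.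
rewrite Er1 in RS1 RL1.
have [u [q' [Eu1 [Ru1 Rb1]]]] : exists u q', last ([:: g] ++ a, q) (slice r1 r2 cs) = (u ++ a, q') /\
    (forall t', reach ([:: g] ++ t', q) (slice r1 r2 es) (u ++ t', q')) /\
    (forall t' H, size t' <= size a -> all (fun x => size x.1 <= H) (slice r1 r2 cs) ->
       reachB ([:: g] ++ t', q) (slice r1 r2 es) (u ++ t', q') H).
  apply: frame_reach RS1 _ => //; apply: (@all_slice _ _ c1) => k Hk1 Hk2 /=.
  have := I1 k Hk1 (leq_ltn_trans Hk2 (leq_ltn_trans Hr2f2 Hf21)); lia.
rewrite RL1 in Eu1.
have [v Ev] : exists v, u = g :: v.
  case: u Eu1 Ru1 Rb1 => [|u0 v] Eu1 _ _.
    have : h r2 = size a by rewrite Eu1.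
    lia.
  exists v; rewrite Lg1 Eu1 /=; done.
have Eq' : q' = q by rewrite Lq1 Eu1.
subst u q'.
have Hsr2 : h r2 = (size (v ++ a)).+1 by rewrite Eu1 /= size_cat.
have [RS2 RL2] := RS r2 f2 Hr2f2 Hf2m.
rewrite Eu1 (_ : (g :: v) ++ a = [:: g] ++ (v ++ a)) // in RS2 RL2.
have [w [q2 [Ew2 [Ru2 Rb2]]]] : exists w q2, last ([:: g] ++ (v ++ a), q) (slice r2 f2 cs) = (w ++ (v ++ a), q2) /\
    (forall t', reach ([:: g] ++ t', q) (slice r2 f2 es) (w ++ t', q2)) /\
    (forall t' H, size t' <= size (v ++ a) -> all (fun x => size x.1 <= H) (slice r2 f2 cs) ->
       reachB ([:: g] ++ t', q) (slice r2 f2 es) (w ++ t', q2) H).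
  apply: frame_reach RS2 _ => //; apply: (@all_slice _ _ c1) => k Hk1 Hk2 /=.
  case: (ltngtP k f2) => Hk.
  - have := I2 k Hk1 Hk; lia.
  - lia.
  - subst k; lia.
rewrite RL2 in Ew2.
have [dl Ew] : exists dl, w = [:: dl].
  case: w Ew2 Ru2 Rb2 => [|w0 [|w1 w']] Ew2 _ _; last first.
  - have : h f2 = (size (w1 :: w' ++ v ++ a)).+1 by rewrite Ew2.
    rewrite /= !size_cat /= in Hsr2 *; lia.
  - by exists w0.
  - have : h f2 = size (v ++ a) by rewrite Ew2.
    lia.
subst w.
have [RS3 RL3] := RS f2 f1 (ltnW Hf21) Hf1m.
rewrite Ew2 (_ : [:: dl] ++ v ++ a = (dl :: v) ++ a) // in RS3 RL3.
have [w2 [q3 [Ew3 [Ru3 Rb3]]]] : exists w q3, last ((dl :: v) ++ a, q2) (slice f2 f1 cs) = (w ++ a, q3) /\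
    (forall t', reach ((dl :: v) ++ t', q2) (slice f2 f1 es) (w ++ t', q3)) /\
    (forall t' H, size t' <= size a -> all (fun x => size x.1 <= H) (slice f2 f1 cs) ->
       reachB ((dl :: v) ++ t', q2) (slice f2 f1 es) (w ++ t', q3) H).
  apply: frame_reach RS3 _ => //; apply: (@all_slice _ _ c1) => k Hk1 Hk2 /=.
  case: (ltngtP k f1) => Hk.
  - have Hrk : r1 < k by lia.
    have := I1 k Hrk Hk; lia.
  - lia.
  - subst k; lia.
rewrite RL3 in Ew3.
have Ew2' : w2 = [:: dl].
  case: w2 Ew3 Ru3 Rb3 => [|w0 [|w1 w']] Ew3 _ _.
  - have : h f1 = size a by rewrite Ew3.
    lia.
  - by move: Lg2; rewrite Ew3 Ew2 /= => ->.
  - have : h f1 = (size (w1 :: w' ++ a)).+1 by rewrite Ew3.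
    rewrite /= !size_cat /= in Hsa *; lia.
have Eq3 : q3 = q2 by move: Lq2; rewrite Ew3 Ew2.
subst w2 q3.
have allM : forall a b, b <= m -> all (fun x : cfg => size x.1 <= M) (slice a b cs).
  move=> a0 b0 Hb0; apply: (@all_slice _ _ c1) => k Hk1 Hk2 /=; apply: HM; lia.
have [RS0 RL0] := RS 0 r1 (leq0n _) Hr1m.
have [RS4 RL4] := RS f1 m Hf1m (leqnn _).
have RX : reachB c1 (slice 0 r1 es) ([:: g] ++ a, q) M.
  by exists (slice 0 r1 cs); split; [exact: RS0 | rewrite -Er1; exact: RL0 | apply: allM].
rewrite Ew3 in RS4 RL4; rewrite HC2 in RL4.
have RZ : reachB ([:: dl] ++ a, q2) (slice f1 m es) c2 M.
  by exists (slice f1 m cs); split => //; apply: allM.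
have size_slice : forall a0 b0, a0 <= b0 -> b0 <= m -> size (slice a0 b0 es) = b0 - a0.
  by move=> a0 b0 _ Hb; rewrite /slice size_takel // size_drop leq_sub2r.
exists (slice 0 r1 es), (slice r1 r2 es), (slice r2 f2 es), (slice f2 f1 es), (slice f1 m es).
split.
- rewrite (slice_cat es (ltnW Hf21) Hf1m) (slice_cat es Hr2f2 Hf2m).
  rewrite (slice_cat es (ltnW Hr12) Hr2m) (slice_cat es (leq0n r1) Hr1m).
  by rewrite /m slice_full.
- rewrite size_slice //; [lia | exact: ltnW].
- rewrite size_slice //; [lia | exact: ltnW].
- move=> j; split => //; apply: (reach_run (c' := c2)).
  apply: reach_cat; first by exists M; exact: RX.
  apply: reach_cat; first by apply: (pump_up (v := v)) => t'; exact: Ru1.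
  apply: reach_cat; first exact: Ru2.
  apply: reach_cat; first by apply: (pump_down (v := v)) => t'; exact: Ru3.
  by exists M.
- have RB : reachB c1 (slice 0 r1 es ++ slice r2 f2 es ++ slice f1 m es) c2 M.
    apply: reachB_cat RX _; apply: reachB_cat _ RZ.
    by apply: Rb2; [rewrite size_cat leq_addl | apply: allM].
  case: RB => cs' [Hr' Hl' Ha'].
  split; first by split => //; exists cs'.
  rewrite /ash Hr' Hl' -HB /B -HC2; apply: leq_sub2r.
  apply/bigmax_leqP_seq => x; rewrite inE => /orP[/eqP ->|Hx] _.
    exact: (HM 0 (leq0n _)).
  exact: (allP Ha').
Qed.
End Dec.

Local Open Scope ring_scope.

Lemma pweight_cat (A : wps) (p q : seq (edge (st A) (alph A))) : pweight (p ++ q) = pweight p + pweight q.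
Proof. by rewrite /pweight big_cat. Qed.

Lemma int_ineq (n a b c e f : int) : n <= a + (b + (c + (e + f))) -> b + e <= 0 -> n <= a + (c + f).
Proof. move=> H1 H2; lia. Qed.

Theorem lemma2 (A : wps) (c1 c2 : config A) (n : int) (d : nat) :
  (exists es, path_from_to c1 c2 es /\ n <= pweight es) ->
  (exists es, [/\ path_from_to c1 c2 es, n <= pweight es & ash c1 es = d]) ->
  (forall es, path_from_to c1 c2 es -> n <= pweight es -> (d <= ash c1 es)%N) ->
  ((#|st A| * #|alph A|) ^ 2 <= d)%N ->
  exists es, [/\ path_from_to c1 c2 es, ash c1 es = d &
    exists p1 p2, pumpable_pair c1 es p1 p2 /\ 0 < pweight p1 + pweight p2].
Proof.
move=> _ [es0 [Hp0 Hw0 Ha0]] Hmin Hd.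
set G := exists es, _.
have step : forall es, path_from_to c1 c2 es -> n <= pweight es -> ash c1 es = d ->
    G \/ exists es', [/\ (size es' < size es)%N, path_from_to c1 c2 es', n <= pweight es' & ash c1 es' = d].
  move=> es Hp Hw Ha; case: (Hp) => Hc1 [cs [Hr Hl]].
  have [x [p1 [y [p2 [z [E Hs1 Hs2 Hv [Hp' Ha']]]]]]] := decomp Hc1 Hr Hl Ha Hd.
  case: (ltrP 0 (pweight p1 + pweight p2)) => Hpos.
    left; exists es; split => //; exists p1, p2; split => //.
    by split => //; split => //; exists x, y, z.
  right; exists (x ++ y ++ z); split => //.
  - by rewrite E !size_cat; lia.
  - by move: Hw; rewrite E !pweight_cat; move/int_ineq; apply.
  - apply/eqP; rewrite eqn_leq Ha' /=; apply: Hmin => //.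
    by move: Hw; rewrite E !pweight_cat; move/int_ineq; apply.
suff : forall k es, (size es <= k)%N -> path_from_to c1 c2 es -> n <= pweight es -> ash c1 es = d -> G.
  by move=> /(_ _ es0 (leqnn _)); apply.
elim=> [|k IH] es Hk Hp Hw Ha; case: (step es Hp Hw Ha) => // [[es' [Hs Hp' Hw' Ha']]].
  by move: Hk Hs; lia.
apply: (IH es') => //; lia.
Qed.
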